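(* Let $\mathcal{I}$ be the collection of isometry classes of finite metric spaces, and for each $\zeta\in\mathcal{I}$ fix a representative $(X_\zeta,d_{X_\zeta})$, let $G_\zeta$ be its isometry group, and let $\Xi_\zeta$ be the set of partitions of $X_\zeta$ fixed by the natural action of $G_\zeta$ on the set $\mathcal{P}(X_\zeta)$ of partitions of $X_\zeta$. Then every clustering functor $\mathfrak{C}$ on $\mathcal{M}^{iso}$ determines, for each $\zeta\in\mathcal{I}$, the partition $p_\zeta:=\mathfrak{C}(X_\zeta,d_{X_\zeta})\in\Xi_\zeta$; conversely, any choice of $p_\zeta\in\Xi_\zeta$ for every $\zeta\in\mathcal{I}$ arises in this way from a (unique) clustering functor on $\mathcal{M}^{iso}$. That is, $\mathfrak{C}\mapsto(\mathfrak{C}(X_\zeta,d_{X_\zeta}))_{\zeta\in\mathcal{I}}$ is a bijection between clustering functors on $\mathcal{M}^{iso}$ and choices $(p_\zeta)_{\zeta\in\mathcal I}$ with $p_\zeta\in\Xi_\zeta$.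
   Context: $\mathcal{M}^{iso}$ is the category whose objects are finite metric spaces and whose morphisms $f:(X,d_X)\to(Y,d_Y)$ are isometries, i.e. bijections with $d_Y(f(x),f(x'))=d_X(x,x')$ for all $x,x'$. For a set map $f:X\to Y$ and a partition $P_Y$ of $Y$, $f^*(P_Y)$ is the partition of $X$ whose blocks are the nonempty sets $f^{-1}(B)$, $B$ a block of $P_Y$. A clustering functor on $\mathcal{M}^{iso}$ is a rule $\mathfrak{C}$ assigning to every finite metric space $(X,d_X)$ a partition $\mathfrak{C}(X,d_X)=P_X$ of $X$ such that for every morphism $f:(X,d_X)\to(Y,d_Y)$ of $\mathcal{M}^{iso}$, $P_X$ refines $f^*(P_Y)$ (i.e. $f$ is a morphism $(X,P_X)\to(Y,P_Y)$ of the category of partitioned finite sets). *)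

(* Defs.v *)
From HB Require Import structures.
From mathcomp Require Import all_boot all_order all_algebra.
From mathcomp Require Import reals.
Set Implicit Arguments. Unset Strict Implicit. Unset Printing Implicit Defensive.
Import Order.TTheory GRing.Theory Num.Theory.
Local Open Scope ring_scope.

Record finMetric (R : realType) := FinMetric {
  carrier : finType;
  dist : carrier -> carrier -> R;
  dist_refl : forall x, dist x x = 0;
  dist_sep : forall x y, dist x y = 0 -> x = y;
  dist_sym : forall x y, dist x y = dist y x;
  dist_tri : forall x y z, dist x z <= dist x y + dist y z
}.
Coercion carrier : finMetric >-> finType.
Arguments dist {R} M x y : rename.

(* Morphisms of M^iso: distance-preserving bijections. *)
Definition isometry (R : realType) (M N : finMetric R) (f : M -> N) : Prop :=
  bijective f /\ forall x x', dist N (f x) (f x') = dist M x x'.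

Definition isometric (R : realType) (M N : finMetric R) : Prop :=
  exists f : M -> N, isometry f.

(* Partitions of a finite set X: mathcomp's [partition P [set: X]]
   (blocks nonempty, pairwise disjoint, covering X). *)
Definition is_partition (X : finType) (P : {set {set X}}) : bool :=
  partition P [set: X].

Definition pullback (X Y : finType) (f : X -> Y) (PY : {set {set Y}})
  : {set {set X}} :=
  [set f @^-1: B | B : {set Y} in PY & f @^-1: B != set0].

Definition refines (X : finType) (P Q : {set {set X}}) : Prop :=
  forall B, B \in P -> exists2 C, C \in Q & B \subset C.

Record clustering_functor (R : realType) := ClusteringFunctor {
  cf :> forall M : finMetric R, {set {set M}};
  cf_partition : forall M : finMetric R, is_partition (cf M);
  cf_functorial : forall (M N : finMetric R) (f : M -> N),
      isometry f -> refines (cf M) (pullback f (cf N))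
}.

Definition act_partition (X : finType) (g : X -> X) (P : {set {set X}})
  : {set {set X}} :=
  [set g @: B | B : {set X} in P].

Definition Xi (R : realType) (M : finMetric R) (P : {set {set M}}) : Prop :=
  is_partition P /\ forall g : M -> M, isometry g -> act_partition g P = P.

(* Main.v *)
Require Import Defs.
From HB Require Import structures.
From mathcomp Require Import all_boot all_order all_algebra.
From mathcomp Require Import reals.
From Stdlib Require Import IndefiniteDescription.
Set Implicit Arguments. Unset Strict Implicit. Unset Printing Implicit Defensive.

Lemma iso_inv (R : realType) (M N : finMetric R) (f : M -> N) :
  Defs.isometry f -> exists2 g : N -> M, Defs.isometry g & cancel f g /\ cancel g f.
Proof.
case=> [[g fg gf] Hd]; exists g => //; split.
  by exists f.
by move=> y y'; rewrite -Hd !gf.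
Qed.

Lemma iso_comp (R : realType) (A B C : finMetric R) (f : A -> B) (g : B -> C) :
  Defs.isometry f -> Defs.isometry g -> Defs.isometry (g \o f).
Proof.
move=> [bf Hf] [bg Hg]; split; first exact: bij_comp.
by move=> x x' /=; rewrite Hg Hf.
Qed.

Lemma part_cover (X : finType) (P : {set {set X}}) x :
  is_partition P -> exists2 B, B \in P & x \in B.
Proof.
move/and3P=> [/eqP hc _ _].
have: x \in cover P by rewrite hc inE.
by case/bigcupP => B HB Hx; exists B.
Qed.

Lemma part_eq (X : finType) (P : {set {set X}}) B1 B2 x :
  is_partition P -> B1 \in P -> B2 \in P -> x \in B1 -> x \in B2 -> B1 = B2.
Proof.
move/and3P=> [_ ht _] H1 H2 x1 x2.
by rewrite -(def_pblock ht H1 x1) (def_pblock ht H2 x2).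
Qed.

Lemma part_ne0 (X : finType) (P : {set {set X}}) B :
  is_partition P -> B \in P -> exists x, x \in B.
Proof.
move/and3P=> [_ _ h0] HB.
have: B != set0 by apply: contraNneq h0 => <-.
by case/set0Pn => x Hx; exists x.
Qed.

Lemma part_img (X Y : finType) (f : X -> Y) (g : Y -> X) (P : {set {set X}}) :
  cancel f g -> cancel g f -> is_partition P -> is_partition [set f @: B | B : {set X} in P].
Proof.
move=> fg gf HP; apply/and3P; split.
- apply/eqP/setP=> y; rewrite inE.
  case: (part_cover (g y) HP) => B HB Hy.
  apply/bigcupP; exists (f @: B); first exact: imset_f.
  by rewrite -[y]gf; apply: imset_f.
- apply/trivIsetP => A' B' /imsetP[A HA ->] /imsetP[B HB ->] neq.
  rewrite -setI_eq0; apply/eqP/setP => y; rewrite !inE; apply/negP.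
  move=> /andP[/imsetP[a Ha ->] /imsetP[b Hb eab]].
  have eab' : a = b by apply: (can_inj fg).
  subst b; move: neq; by rewrite (part_eq HP HA HB Ha Hb) eqxx.
- apply/negP => /imsetP[B HB] /esym /eqP; rewrite imset_eq0 => /eqP eB.
  subst B; case: (part_ne0 HP HB) => x; by rewrite inE.
Qed.

Lemma transport1 (X Y : finType) (f : X -> Y) (g : Y -> X)
  (P : {set {set X}}) (Q : {set {set Y}}) :
  cancel f g -> cancel g f -> is_partition P -> is_partition Q ->
  refines P (pullback f Q) -> refines Q (pullback g P) ->
  forall B, B \in P -> f @: B \in Q.
Proof.
move=> fg gf HP HQ RP RQ B HB.
case: (part_ne0 HP HB) => x Hx.
case: (RP B HB) => C' /imsetP[C HC ->] sub.
move: HC; rewrite !inE => /andP[HC _].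
case: (RQ C HC) => B'' /imsetP[B' HB' ->] sub2.
move: HB'; rewrite !inE => /andP[HB' _].
have fx : f x \in C by have := subsetP sub x Hx; rewrite inE.
have xB' : x \in B' by have := subsetP sub2 (f x) fx; rewrite inE fg.
have eB := part_eq HP HB HB' Hx xB'; subst B'.
suff -> : f @: B = C by [].
apply/setP=> y; apply/idP/idP.
- by case/imsetP=> b Hb ->; have := subsetP sub b Hb; rewrite inE.
- move=> Hy; have := subsetP sub2 y Hy; rewrite inE => Hg.
  by rewrite -[y]gf; apply: imset_f.
Qed.

Lemma transport (X Y : finType) (f : X -> Y) (g : Y -> X)
  (P : {set {set X}}) (Q : {set {set Y}}) :
  cancel f g -> cancel g f -> is_partition P -> is_partition Q ->
  refines P (pullback f Q) -> refines Q (pullback g P) ->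
  Q = [set f @: B | B : {set X} in P].
Proof.
move=> fg gf HP HQ RP RQ; apply/setP=> C; apply/idP/idP.
- move=> HC.
  have H1 := transport1 gf fg HQ HP RQ RP HC.
  have -> : C = f @: (g @: C).
    apply/setP=> y; apply/idP/idP.
    + by move=> Hy; rewrite -[y]gf; apply: imset_f; apply: imset_f.
    + by case/imsetP=> x /imsetP[c Hc ->] ->; rewrite gf.
  exact: imset_f.
- by case/imsetP=> B HB ->; apply: (transport1 fg gf HP HQ RP RQ).
Qed.

Lemma fixed_refines (R : realType) (A M N : finMetric R) (P : {set {set A}})
  (g1 : A -> M) (g2 : A -> N) (f : M -> N) :
  Xi P -> Defs.isometry g1 -> Defs.isometry g2 -> Defs.isometry f ->
  refines [set g1 @: B | B : {set A} in P] (pullback f [set g2 @: B | B : {set A} in P]).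
Proof.
move=> [HP HX] i1 i2 iF B1 /imsetP[B HB ->].
case: (iso_inv i2) => g2i i2i [c1 c2].
pose h := g2i \o (f \o g1).
have ih : Defs.isometry h by apply: iso_comp => //; apply: iso_comp.
have hB : h @: B \in P by rewrite -(HX h ih); apply: imset_f.
case: (part_ne0 HP HB) => x Hx.
have sub : g1 @: B \subset f @^-1: (g2 @: (h @: B)).
  apply/subsetP => y /imsetP[b Hb ->]; rewrite inE.
  have -> : f (g1 b) = g2 (h b) by rewrite /h /= c2.
  by apply: imset_f; apply: imset_f.
exists (f @^-1: (g2 @: (h @: B))) => //.
apply/imsetP; exists (g2 @: (h @: B)) => //.
rewrite !inE; apply/andP; split; first exact: imset_f.
apply/set0Pn; exists (g1 x); apply: (subsetP sub); exact: imset_f.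
Qed.

Theorem mainTheorem2 (R : realType) (I : Type) (rep : I -> finMetric R)
  (rep_surj : forall M : finMetric R, exists z : I, isometric M (rep z))
  (rep_inj : forall z z' : I, isometric (rep z) (rep z') -> z = z') :
  (forall (C : clustering_functor R) (z : I), Xi (C (rep z)))
  /\ (forall p : forall z : I, {set {set carrier (rep z)}},
        (forall z, Xi (p z)) ->
        exists C : clustering_functor R, forall z, C (rep z) = p z)
  /\ (forall C C' : clustering_functor R,
        (forall z, C (rep z) = C' (rep z)) -> forall M : finMetric R, C M = C' M).
Proof.
split; [|split].
- move=> C z; split; first exact: cf_partition.
  move=> g ig; case: (iso_inv ig) => h ih [c1 c2].
  by rewrite /act_partition -(transport c1 c2 (cf_partition C _) (cf_partition C _)
      (@cf_functorial _ C _ _ _ ig) (@cf_functorial _ C _ _ _ ih)).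
- move=> p Hp.
  have ch : forall M : finMetric R, {z : I & {g : rep z -> M | Defs.isometry g}}.
    move=> M.
    have ex : exists z, exists g : rep z -> M, Defs.isometry g.
      case: (rep_surj M) => z [f iF]; case: (iso_inv iF) => g ig _.
      by exists z, g.
    case: (constructive_indefinite_description _ ex) => z ex2.
    exists z; exact: constructive_indefinite_description _ ex2.
  pose cfun (M : finMetric R) : {set {set M}} :=
    let: existT z (exist g _) := ch M in [set g @: B | B : {set rep z} in p z].
  have cpart : forall M, is_partition (cfun M).
    move=> M; rewrite /cfun; case: (ch M) => z [g ig].
    case: (iso_inv ig) => gi _ [c1 c2].
    exact: part_img c1 c2 (proj1 (Hp z)).
  have cfunc : forall (M N : finMetric R) (f : M -> N),
      Defs.isometry f -> refines (cfun M) (pullback f (cfun N)).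
    move=> M N f iF; rewrite /cfun.
    case: (ch M) => z1 [g1 i1]; case: (ch N) => z2 [g2 i2].
    have ez : z1 = z2.
      apply: rep_inj; case: (iso_inv i2) => g2i i2i _.
      exists (g2i \o (f \o g1)); apply: iso_comp => //; exact: iso_comp.
    subst z2; exact: fixed_refines (Hp z1) i1 i2 iF.
  exists (ClusteringFunctor cpart cfunc) => z /=.
  rewrite /cfun; case: (ch (rep z)) => z1 [g ig].
  have ez : z1 = z by apply: rep_inj; exists g.
  subst z1; exact: (proj2 (Hp z) g ig).
- move=> C C' HCC M.
  case: (rep_surj M) => z [f iF]; case: (iso_inv iF) => h ih [c1 c2].
  have e1 := transport c2 c1 (cf_partition C (rep z)) (cf_partition C M)
      (@cf_functorial _ C _ _ _ ih) (@cf_functorial _ C _ _ _ iF).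
  have e2 := transport c2 c1 (cf_partition C' (rep z)) (cf_partition C' M)
      (@cf_functorial _ C' _ _ _ ih) (@cf_functorial _ C' _ _ _ iF).
  by rewrite e1 e2 HCC.
Qed.
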